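(* For any essentially distributed Petri net $N$ there is an LSGA net $N'$ with $N'\approx^\Delta_{bSTb}N$.
   Context: Fix visible actions $\mathrm{Act}$ and $\tau\notin\mathrm{Act}$. A Petri net $N=(S,T,F,M_0,\ell)$: $S,T$ disjoint, $F:(S\times T)\cup(T\times S)\to\mathbb N$, $M_0\in\mathbb N^S$, $\ell:T\to\mathrm{Act}\cup\{\tau\}$. ${}^\bullet x(y)=F(y,x)$, $x^\bullet(y)=F(x,y)$ (multisets, extended additively); for a finite nonempty multiset $G$ of transitions $M[G\rangle M'$ iff ${}^\bullet G\le M$ and $M'=M-{}^\bullet G+G^\bullet$; reachable markings as usual; $t\smile u$ iff $M[\{t\}+\{u\}\rangle$ for some reachable $M$. Essentially distributed: there is a function $D$ on $S\cup T$ such that (1) $s\in{}^\bullet t\Rightarrow D(t)=D(s)$, and (2') for all $t,u\in T$, if $t\smile u$ and $\ell(t)\ne\tau$ then $D(t)\ne D(u)$. Components and LSGA nets: a component with interface is $(N,I,O)$ with $I,O\subseteq S$, $I\cap O=\emptyset$ and $o^\bullet=\emptyset$ for all $o\in O$. It is sequential iff there is $Q\subseteq S\setminus(I\cup O)$ such that for every $t\in T$, $|{}^\bullet t\restriction Q|=1$ and $|t^\bullet\restriction Q|=1$, and $|M_0\restriction Q|=1$ (cardinality with multiplicity). Given components $((S_k,T_k,F_k,M_{0k},\ell_k),I_k,O_k)$, $k\in K$, with $(S_k\cup T_k)\cap(S_l\cup T_l)=(I_k\cup O_k)\cap(I_l\cup O_l)$ and $I_k\cap I_l=\emptyset$ for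 $k\ne l$, their asynchronous parallel composition is $((\bigcup S_k,\bigcup T_k,\bigcup F_k,\sum M_{0k},\bigcup\ell_k),\bigcup I_k,\bigcup O_k\setminus\bigcup I_k)$. A net $N$ is an LSGA net iff $(N,I,O)$ is the asynchronous parallel composition of some family of sequential components, for some $I,O$. $\approx^\Delta_{bSTb}$: LTS notation: $\Rightarrow$ reflexive transitive closure of $\xrightarrow{\tau}$; $\mathfrak M\xrightarrow{(\alpha)}\mathfrak M'$ iff $\mathfrak M\xrightarrow{\alpha}\mathfrak M'$ or ($\alpha=\tau$ and $\mathfrak M=\mathfrak M'$). A branching bisimulation with explicit divergence is a relation $\mathcal B$ between the states of two LTSs, relating initial states, such that if $\mathfrak M_1\mathcal B\mathfrak M_2$ and $\mathfrak M_1\xrightarrow{\alpha}\mathfrak M_1'$ then $\mathfrak M_2\Rightarrow\mathfrak M_2^\dagger\xrightarrow{(\alpha)}\mathfrak M_2'$ with $\mathfrak M_1\mathcal B\mathfrak M_2^\dagger$, $\mathfrak M_1'\mathcal B\mathfrak M_2'$, and symmetrically; and if $\mathfrak M_1\mathcal B\mathfrak M_2$ and there is an infinite $\tau$-sequence from $\mathfrak M_1$ all of whose states are related to $\mathfrak M_2$, then there is an infinite $\tau$-sequence from $\mathfrak M_2$ such that every state of the first is related to every state of the second, and symmetrically. ST-LTS of a net: states $(M,U)\in\mathbb N^S\times T^*$, initial $(M_0,\varepsilon)$; $(M,U)\xrightarrow{a^+}(M-{}^\bullet t,Ut)$ iff $\ell(t)=a\in\mathrm{Act}$ and $M[t\rangle$;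 $(M,U)\xrightarrow{a^{-n}}(M+t^\bullet,U^{-n})$ iff the $n$-th element $t$ of $U$ has label $a$ ($U^{-n}$ removes it); $(M,U)\xrightarrow{\tau}(M',U)$ iff $M[t\rangle M'$ with $\ell(t)=\tau$. $N_1\approx^\Delta_{bSTb}N_2$ iff their ST-LTSs are related by a branching bisimulation with explicit divergence. *)

(* Defs.v *)
From Stdlib Require Import List Arith Relations.
Import ListNotations.
Unset Implicit Arguments.

(** A Petri net over visible actions [Act]; label [None] is tau.
    S and T are disjoint since they are distinct types. *)
Record net (Act : Type) := Net {
  place : Type;
  trans : Type;
  pre   : place -> trans -> nat;
  post  : trans -> place -> nat;
  init  : place -> nat;
  lab   : trans -> option Act
}.
Arguments place {Act}. Arguments trans {Act}. Arguments pre {Act}.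
Arguments post {Act}. Arguments init {Act}. Arguments lab {Act}.

Definition marking {Act} (N : net Act) := place N -> nat.

Definition enabled {Act} (N : net Act) (M : marking N) (t : trans N) : Prop :=
  forall s, pre N s t <= M s.

Definition fires {Act} (N : net Act) (M : marking N) (t : trans N) (M' : marking N) : Prop :=
  enabled N M t /\ forall s, M' s = M s - pre N s t + post N t s.

Inductive reachable {Act} (N : net Act) : marking N -> Prop :=
| reach_init : reachable N (init N)
| reach_step : forall M t M', reachable N M -> fires N M t M' -> reachable N M'.

Definition concurrent {Act} (N : net Act) (t u : trans N) : Prop :=
  exists M, reachable N M /\ forall s, pre N s t + pre N s u <= M s.

Definition ess_distributed {Act} (N : net Act) : Prop :=
  exists (Loc : Type) (DS : place N -> Loc) (DT : trans N -> Loc),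
    (forall s t, 0 < pre N s t -> DT t = DS s) /\
    (forall t u, concurrent N t u -> lab N t <> None -> DT t <> DT u).

Inductive stlab (Act : Type) :=
| Start : Act -> stlab Act
| Term  : Act -> nat -> stlab Act
| Tau   : stlab Act.
Arguments Tau {Act}. Arguments Start {Act}. Arguments Term {Act}.

Definition ststate {Act} (N : net Act) : Type := (marking N * list (trans N))%type.

(** U^{-n}: remove the n-th element (1-indexed) *)
Definition remove_nth {A} (n : nat) (U : list A) : list A :=
  firstn (n - 1) U ++ skipn n U.

Inductive st_step {Act} (N : net Act) : ststate N -> stlab Act -> ststate N -> Prop :=
| st_start : forall M U t a,
    lab N t = Some a -> enabled N M t ->
    st_step N (M, U) (Start a) (fun s => M s - pre N s t, U ++ [t])
| st_term : forall M U t a n,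
    1 <= n -> nth_error U (n - 1) = Some t -> lab N t = Some a ->
    st_step N (M, U) (Term a n) (fun s => M s + post N t s, remove_nth n U)
| st_tau : forall M M' U t,
    lab N t = None -> fires N M t M' ->
    st_step N (M, U) Tau (M', U).

Definition st_init {Act} (N : net Act) : ststate N := (init N, []).

Section BB.
Variables (L St1 St2 : Type) (tau : L).
Variables (step1 : St1 -> L -> St1 -> Prop) (step2 : St2 -> L -> St2 -> Prop).

Definition tau_star {St} (step : St -> L -> St -> Prop) : relation St :=
  clos_refl_trans St (fun p q => step p tau q).

Definition opt_step {St} (step : St -> L -> St -> Prop) (p : St) (a : L) (q : St) : Prop :=
  step p a q \/ (a = tau /\ p = q).

Definition transfer {A B} (stepA : A -> L -> A -> Prop) (stepB : B -> L -> B -> Prop)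
  (R : A -> B -> Prop) : Prop :=
  forall p q a p', R p q -> stepA p a p' ->
    exists q1 q', tau_star stepB q q1 /\ opt_step stepB q1 a q' /\ R p q1 /\ R p' q'.

Definition divergence {A B} (stepA : A -> L -> A -> Prop) (stepB : B -> L -> B -> Prop)
  (R : A -> B -> Prop) : Prop :=
  forall p q (f : nat -> A), R p q -> f 0 = p ->
    (forall i, stepA (f i) tau (f (S i))) -> (forall i, R (f i) q) ->
    exists g : nat -> B, g 0 = q /\ (forall i, stepB (g i) tau (g (S i))) /\
      forall i j, R (f i) (g j).

Definition bb_div (R : St1 -> St2 -> Prop) (i1 : St1) (i2 : St2) : Prop :=
  R i1 i2 /\
  transfer step1 step2 R /\ transfer step2 step1 (fun q p => R p q) /\
  divergence step1 step2 R /\ divergence step2 step1 (fun q p => R p q).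
End BB.

Definition bSTb_div_equiv {Act} (N1 N2 : net Act) : Prop :=
  exists R : ststate N1 -> ststate N2 -> Prop,
    bb_div (stlab Act) (ststate N1) (ststate N2) Tau (st_step N1) (st_step N2) R (st_init N1) (st_init N2).

(** Components are sub-structures of the composite net N (whose places and
    transitions form the common universe).  Component data outside its own
    places/transitions are required to be 0 (they are not part of it). *)
Record component {Act : Type} (N : net Act) := Comp {
  cS   : place N -> Prop;
  cT   : trans N -> Prop;
  cpre : place N -> trans N -> nat;
  cpost: trans N -> place N -> nat;
  cinit: place N -> nat;
  clab : trans N -> option Act;
  cI   : place N -> Prop;
  cO   : place N -> Prop
}.
Arguments cS {Act N}. Arguments cT {Act N}. Arguments cpre {Act N}.
Arguments cpost {Act N}. Arguments cinit {Act N}. Arguments clab {Act N}.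
Arguments cI {Act N}. Arguments cO {Act N}.

Definition card1_on {P} (m : P -> nat) (Q : P -> Prop) : Prop :=
  exists q, Q q /\ m q = 1 /\ forall q', Q q' -> q' <> q -> m q' = 0.

Definition is_component {Act} {N : net Act} (C : component N) : Prop :=
  (forall s t, (~ cS C s \/ ~ cT C t) -> cpre C s t = 0 /\ cpost C t s = 0) /\
  (forall s, ~ cS C s -> cinit C s = 0) /\
  (forall s, cI C s -> cS C s) /\ (forall s, cO C s -> cS C s) /\
  (forall s, ~ (cI C s /\ cO C s)) /\
  (forall o t, cO C o -> cT C t -> cpre C o t = 0).

Definition is_sequential {Act} {N : net Act} (C : component N) : Prop :=
  is_component C /\
  exists Q : place N -> Prop,
    (forall q, Q q -> cS C q /\ ~ cI C q /\ ~ cO C q) /\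
    (forall t, cT C t -> card1_on (fun q => cpre C q t) Q /\ card1_on (fun q => cpost C t q) Q) /\
    card1_on (cinit C) Q.

Definition is_sum {K} (f : K -> nat) (n : nat) : Prop :=
  exists l : list K, NoDup l /\ (forall k, f k <> 0 -> In k l) /\
    n = fold_right plus 0 (map f l).

(** N is the asynchronous parallel composition of the family C (the net part;
    the resulting interface is determined by the family). *)
Definition is_async_composition {Act} (N : net Act) (K : Type) (C : K -> component N) : Prop :=
  (forall k l, k <> l ->
     (forall s, (cS (C k) s /\ cS (C l) s) <->
                ((cI (C k) s \/ cO (C k) s) /\ (cI (C l) s \/ cO (C l) s))) /\
     (forall t, ~ (cT (C k) t /\ cT (C l) t)) /\
     (forall s, ~ (cI (C k) s /\ cI (C l) s))) /\
  (forall s, exists k, cS (C k) s) /\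
  (forall t, exists k, cT (C k) t) /\
  (forall k s t, cT (C k) t -> pre N s t = cpre (C k) s t /\ post N t s = cpost (C k) t s) /\
  (forall k t, cT (C k) t -> lab N t = clab (C k) t) /\
  (forall s, is_sum (fun k => cinit (C k) s) (init N s)).

Definition LSGA {Act} (N : net Act) : Prop :=
  exists (K : Type) (C : K -> component N),
    (forall k, is_sequential (C k)) /\ is_async_composition N K C.

(* Main.v *)
Require Import Defs.
From Stdlib Require Import List Arith Lia Relations ClassicalEpsilon FunctionalExtensionality.
Import ListNotations.

Definition ind (P : Prop) : nat := if excluded_middle_informative P then 1 else 0.
Lemma ind_t (P : Prop) : P -> ind P = 1.
Proof. unfold ind; destruct (excluded_middle_informative P); tauto. Qed.
Lemma ind_f (P : Prop) : ~P -> ind P = 0.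
Proof. unfold ind; destruct (excluded_middle_informative P); tauto. Qed.

Definition mkN' {Act} (N : net Act) (Loc : Type) (DT : trans N -> Loc) : net Act :=
  @Net Act (place N + Loc)%type (trans N)
     (fun x t => match x with inl s => pre N s t | inr L => ind (DT t = L) end)
     (fun t x => match x with inl s => post N t s | inr L => ind (DT t = L) end)
     (fun x => match x with inl s => init N s | inr _ => 1 end)
     (lab N).

Definition fsum {A} (f : A -> nat) (U : list A) := fold_right (fun t n => f t + n) 0 U.

Lemma fsum_app {A} (f : A -> nat) U V : fsum f (U ++ V) = fsum f U + fsum f V.
Proof. induction U; simpl; lia. Qed.

Lemma fsum_remove {A} (f : A -> nat) U n t : 1 <= n -> nth_error U (n-1) = Some t ->
  fsum f U = fsum f (remove_nth n U) + f t.
Proof.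
  revert n; induction U as [|a U IH]; intros n Hn Ht.
  - destruct (n-1); discriminate.
  - destruct n as [|[|m]]; [lia| |].
    + simpl in Ht. injection Ht as ->. unfold remove_nth. simpl. lia.
    + simpl in Ht.
      assert (E : remove_nth (S (S m)) (a :: U) = a :: remove_nth (S m) U).
      { unfold remove_nth. simpl. rewrite ?Nat.sub_0_r. reflexivity. }
      rewrite E. simpl. rewrite (IH (S m)); [lia|lia|simpl; rewrite ?Nat.sub_0_r; exact Ht].
Qed.

Lemma In_firstn {A} (x : A) n l : In x (firstn n l) -> In x l.
Proof. revert n; induction l; intros [|n]; simpl; try tauto. intros [->|H]; eauto. Qed.
Lemma In_skipn {A} (x : A) n l : In x (skipn n l) -> In x l.
Proof. revert n; induction l; intros [|n]; simpl; try tauto. intros H; eauto. Qed.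
Lemma In_remove {A} (x : A) n l : In x (remove_nth n l) -> In x l.
Proof. unfold remove_nth. intros H. apply in_app_or in H as [H|H]; eauto using In_firstn, In_skipn. Qed.

Lemma fsum_ge {A} (f : A -> nat) U t : In t U -> f t <= fsum f U.
Proof. induction U; simpl; [tauto|]. intros [->|H]; [lia|]. specialize (IHU H); lia. Qed.

Lemma fsum_zero {A} (f : A -> nat) U : (forall u, In u U -> f u = 0) -> fsum f U = 0.
Proof. induction U; simpl; auto. intros H. rewrite H by auto. rewrite IHU; auto. Qed.

Lemma reach_ext {Act} (N : net Act) M M2 : reachable N M -> (forall s, M s = M2 s) -> reachable N M2.
Proof. intros H E. replace M2 with M; auto. apply functional_extensionality; auto. Qed.

Definition Rel {Act} (N : net Act) Loc (DT : trans N -> Loc)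
  (p : ststate (mkN' N Loc DT)) (q : ststate N) : Prop :=
  match p, q with (M', U'), (M, U) =>
  U' = U /\ (forall s, M' (inl s) = M s) /\
  (forall L, M' (inr L) + fsum (fun u => ind (DT u = L)) U = 1) /\
  reachable N (fun s => M s + fsum (fun u => pre N s u) U) /\
  (forall u, In u U -> lab N u <> None) end.

Lemma conc_loc {Act} (N : net Act) Loc (DT : trans N -> Loc)
  (H2 : forall t u, concurrent N t u -> lab N t <> None -> DT t <> DT u)
  M U u t :
  reachable N (fun s => M s + fsum (fun u => pre N s u) U) ->
  (forall u, In u U -> lab N u <> None) -> In u U -> enabled N M t -> DT u <> DT t.
Proof.
  intros HR HV Hin He. apply H2; auto.
  exists (fun s => M s + fsum (fun u => pre N s u) U). split; auto.
  intros s. pose proof (fsum_ge (fun u => pre N s u) U u Hin). specialize (He s). simpl in *. lia.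
Qed.

Lemma cnt_zero {Act} (N : net Act) Loc (DT : trans N -> Loc) U L :
  (forall u, In u U -> DT u <> L) -> fsum (fun u => ind (DT u = L)) U = 0.
Proof. intros H. apply fsum_zero. intros u Hu. apply ind_f. auto. Qed.

Lemma fwd {Act} (N : net Act) Loc (DT : trans N -> Loc) p q a p' :
  Rel N Loc DT p q -> st_step (mkN' N Loc DT) p a p' ->
  exists q', st_step N q a q' /\ Rel N Loc DT p' q'.
Proof.
  destruct p as [M' U'], q as [M U]. intros (-> & Hs & HL & HR & HV) Hst.
  inversion Hst as [M1 U1 t a1 Hl He | M1 U1 t a1 n Hn Hnth Hl | M1 M2 U1 t Hl Hf]; subst.
  -
    exists (fun s => M s - pre N s t, U ++ [t]). split.
    + apply (st_start N M U t a1); auto. intros s. specialize (He (inl s)). simpl in He. rewrite <- Hs; auto.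
    + simpl. refine (conj eq_refl (conj _ (conj _ (conj _ _)))).
      * intros s. simpl. rewrite Hs. reflexivity.
      * intros L. specialize (HL L). specialize (He (inr L)). simpl in He. rewrite fsum_app. simpl. lia.
      * eapply reach_ext; [exact HR|]. intros s. rewrite fsum_app. simpl.
        specialize (He (inl s)). simpl in He. rewrite Hs in He. lia.
      * intros u Hu. apply in_app_or in Hu as [Hu|[<-|[]]]; auto. simpl in Hl; congruence.
  -
    exists (fun s => M s + post N t s, remove_nth n U). split.
    + econstructor; eauto.
    + simpl. refine (conj eq_refl (conj _ (conj _ (conj _ _)))).
      * intros s. simpl. rewrite Hs. reflexivity.
      * intros L. specialize (HL L). rewrite (fsum_remove _ U n t) in HL by auto. lia.
      * apply reach_step with (M := fun s => M s + fsum (fun u => pre N s u) U) (t := t); auto.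
        split.
        -- intros s. rewrite (fsum_remove _ U n t) by auto. lia.
        -- intros s. rewrite (fsum_remove _ U n t) by auto. lia.
      * intros u Hu. apply In_remove in Hu; auto.
  -
    destruct Hf as [He Heq].
    exists (fun s => M2 (inl s), U). split.
    + apply (st_tau N M _ U t); auto. split.
      * intros s. specialize (He (inl s)). simpl in He. rewrite <- Hs; auto.
      * intros s. rewrite Heq. simpl. rewrite Hs. reflexivity.
    + simpl. refine (conj eq_refl (conj _ (conj _ (conj _ _)))); auto.
      * intros L. specialize (HL L). rewrite Heq. specialize (He (inr L)). simpl in *. lia.
      * apply reach_step with (M := fun s => M s + fsum (fun u => pre N s u) U) (t := t); auto.
        split.
        -- intros s. specialize (He (inl s)). simpl in He. rewrite Hs in He. lia.
        -- intros s. rewrite Heq. specialize (He (inl s)). simpl in *. rewrite Hs in *. lia.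
Qed.

Lemma en_loc {Act} (N : net Act) Loc (DT : trans N -> Loc)
  (H2 : forall t u, concurrent N t u -> lab N t <> None -> DT t <> DT u)
  M' M U t L :
  Rel N Loc DT (M', U) (M, U) -> enabled N M t -> ind (DT t = L) <= M' (inr L).
Proof.
  intros (_ & Hs & HL & HR & HV) He.
  destruct (excluded_middle_informative (DT t = L)) as [E|E].
  - rewrite ind_t by auto. specialize (HL L).
    rewrite cnt_zero in HL; [lia|]. intros u Hu. rewrite <- E.
    eapply conc_loc; eauto.
  - rewrite ind_f by auto. lia.
Qed.

Lemma bwd {Act} (N : net Act) Loc (DT : trans N -> Loc)
  (H2 : forall t u, concurrent N t u -> lab N t <> None -> DT t <> DT u)
  p q a q' :
  Rel N Loc DT p q -> st_step N q a q' ->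
  exists p', st_step (mkN' N Loc DT) p a p' /\ Rel N Loc DT p' q'.
Proof.
  destruct p as [M' U'], q as [M U]. intros HRel Hst.
  pose proof HRel as (-> & Hs & HL & HR & HV).
  inversion Hst as [M1 U1 t a1 Hl He | M1 U1 t a1 n Hn Hnth Hl | M1 M2 U1 t Hl Hf]; subst.
  -
    assert (He' : enabled (mkN' N Loc DT) M' t).
    { intros [s|L]; simpl. rewrite Hs; auto. eapply en_loc; eauto. }
    exists (fun x => M' x - pre (mkN' N Loc DT) x t, U ++ [t]). split.
    + apply (st_start (mkN' N Loc DT) M' U t a1); auto.
    + simpl. refine (conj eq_refl (conj _ (conj _ (conj _ _)))).
      * intros s. simpl. rewrite Hs. reflexivity.
      * intros L. specialize (HL L). specialize (He' (inr L)). simpl in He'. rewrite fsum_app. simpl. lia.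
      * eapply reach_ext; [exact HR|]. intros s. rewrite fsum_app. simpl.
        specialize (He s). lia.
      * intros u Hu. apply in_app_or in Hu as [Hu|[<-|[]]]; auto. congruence.
  -
    exists (fun x => M' x + post (mkN' N Loc DT) t x, remove_nth n U). split.
    + apply (st_term (mkN' N Loc DT) M' U t a1 n); auto.
    + simpl. refine (conj eq_refl (conj _ (conj _ (conj _ _)))).
      * intros s. simpl. rewrite Hs. reflexivity.
      * intros L. specialize (HL L). rewrite (fsum_remove _ U n t) in HL by auto. lia.
      * apply reach_step with (M := fun s => M s + fsum (fun u => pre N s u) U) (t := t); auto.
        split.
        -- intros s. rewrite (fsum_remove _ U n t) by auto. lia.
        -- intros s. rewrite (fsum_remove _ U n t) by auto. lia.
      * intros u Hu. apply In_remove in Hu; auto.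
  -
    destruct Hf as [He Heq].
    assert (He' : enabled (mkN' N Loc DT) M' t).
    { intros [s|L]; simpl. rewrite Hs; auto. eapply en_loc; eauto. }
    exists (fun x => match x with inl s => M2 s | inr L => M' (inr L) end, U). split.
    + apply (st_tau (mkN' N Loc DT) M' _ U t); auto. split; auto.
      intros [s|L]; simpl.
      * rewrite Heq, Hs. reflexivity.
      * specialize (He' (inr L)). simpl in He'. lia.
    + simpl. refine (conj eq_refl (conj _ (conj _ (conj _ _)))); auto.
      * apply reach_step with (M := fun s => M s + fsum (fun u => pre N s u) U) (t := t); auto.
        split.
        -- intros s. specialize (He s). lia.
        -- intros s. rewrite Heq. specialize (He s). lia.
Qed.

Lemma uniq_q {Act} (N : net Act) Loc (DT : trans N -> Loc) p q q2 :
  Rel N Loc DT p q -> Rel N Loc DT p q2 -> q = q2.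
Proof.
  destruct p as [M' U'], q as [M U], q2 as [M2 U2].
  intros (-> & Hs & _) (-> & Hs2 & _). f_equal.
  apply functional_extensionality. intros s. rewrite <- Hs, <- Hs2. reflexivity.
Qed.

Lemma uniq_p {Act} (N : net Act) Loc (DT : trans N -> Loc) p p2 q :
  Rel N Loc DT p q -> Rel N Loc DT p2 q -> p = p2.
Proof.
  destruct p as [M' U'], q as [M U], p2 as [M2 U2].
  intros (-> & Hs & HL & _) (-> & Hs2 & HL2 & _). f_equal.
  apply functional_extensionality. intros [s|L].
  - rewrite Hs, Hs2. reflexivity.
  - specialize (HL L); specialize (HL2 L). lia.
Qed.

Lemma bisim {Act} (N : net Act) Loc (DT : trans N -> Loc)
  (H2 : forall t u, concurrent N t u -> lab N t <> None -> DT t <> DT u) :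
  bSTb_div_equiv (mkN' N Loc DT) N.
Proof.
  exists (Rel N Loc DT). unfold bb_div.
  refine (conj _ (conj _ (conj _ (conj _ _)))).
  - simpl. refine (conj eq_refl (conj _ (conj _ (conj _ _)))); simpl; auto.
    eapply reach_ext; [apply reach_init|]. intros s. simpl. lia.
  - intros p q a p' HR Hs. destruct (fwd N Loc DT p q a p' HR Hs) as [q' [H1 H3]].
    exists q, q'. split; [apply rt_refl|]. split; [left; auto|]. auto.
  - intros q p a q' HR Hs. destruct (bwd N Loc DT H2 p q a q' HR Hs) as [p' [H1 H3]].
    exists p, p'. split; [apply rt_refl|]. split; [left; auto|]. auto.
  - intros p q f HR H0 Hst Hall. exists (fun _ => q). split; auto. split; [|intros i j; apply Hall].
    intros _. destruct (fwd N Loc DT (f 0) q Tau (f 1) (Hall 0) (Hst 0)) as [q' [H1 H3]].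
    pose proof (uniq_q N Loc DT (f 1) q q' (Hall 1) H3) as E. rewrite <- E in H1. exact H1.
  - intros q p f HR H0 Hst Hall. exists (fun _ => p). split; auto. split; [|intros i j; apply Hall].
    intros _. destruct (bwd N Loc DT H2 p (f 0) Tau (f 1) (Hall 0) (Hst 0)) as [p' [H1 H3]].
    pose proof (uniq_p N Loc DT p p' (f 1) (Hall 1) H3) as E. rewrite <- E in H1. exact H1.
Qed.

Definition comp {Act} (N : net Act) Loc (DS : place N -> Loc) (DT : trans N -> Loc) (k : Loc)
  : component (mkN' N Loc DT) :=
  @Comp Act (mkN' N Loc DT)
    (fun x => match x with inl s => DS s = k \/ exists t, DT t = k /\ post N t s <> 0
                        | inr L => L = k end)
    (fun t => DT t = k)
    (fun x t => if excluded_middle_informative (DT t = k) then pre (mkN' N Loc DT) x t else 0)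
    (fun t x => if excluded_middle_informative (DT t = k) then post (mkN' N Loc DT) t x else 0)
    (fun x => match x with inl s => if excluded_middle_informative (DS s = k) then init N s else 0
                        | inr L => if excluded_middle_informative (L = k) then 1 else 0 end)
    (lab N)
    (fun x => match x with inl s => DS s = k | inr _ => False end)
    (fun x => match x with inl s => DS s <> k /\ exists t, DT t = k /\ post N t s <> 0
                        | inr _ => False end).

Lemma lsga {Act} (N : net Act) Loc (DS : place N -> Loc) (DT : trans N -> Loc)
  (H1 : forall s t, 0 < pre N s t -> DT t = DS s) : LSGA (mkN' N Loc DT).
Proof.
  exists Loc, (comp N Loc DS DT). split.
  - intros k. split.
    +
      split; [|split; [|split; [|split; [|split]]]]; simpl.
      * intros [s|L] t Hn; destruct (excluded_middle_informative (DT t = k)) as [E|E]; try lia.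
        -- destruct Hn as [Hn|Hn]; [|tauto]. split.
           ++ destruct (pre N s t) eqn:P; auto. exfalso. apply Hn. left.
              rewrite <- E. symmetry. apply H1. lia.
           ++ destruct (post N t s) eqn:P; auto. exfalso. apply Hn. right. exists t. split; auto. lia.
        -- destruct Hn as [Hn|Hn]; [|tauto]. rewrite ind_f by congruence. auto.
      * intros [s|L] Hn.
        -- destruct (excluded_middle_informative (DS s = k)); tauto.
        -- destruct (excluded_middle_informative (L = k)); tauto.
      * intros [s|L]; tauto.
      * intros [s|L]; tauto.
      * intros [s|L]; tauto.
      * intros [s|L] t Ho Ht; [|tauto]. destruct (excluded_middle_informative (DT t = k)); [|auto].
        destruct (pre N s t) eqn:P; auto. exfalso. apply (proj1 Ho).
        rewrite <- e. symmetry. apply H1. lia.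
    + exists (fun x => match x with inl _ => False | inr L => L = k end).
      split; [|split]; simpl.
      * intros [s|L]; tauto.
      * intros t Ht. destruct (excluded_middle_informative (DT t = k)); [|tauto].
        split; exists (inr k); simpl; (split; [auto|split]);
          [rewrite ind_t; auto | intros [q|q] [] Hne; subst; tauto
          |rewrite ind_t; auto | intros [q|q] [] Hne; subst; tauto].
      * exists (inr k). simpl. split; auto. split.
        -- destruct (excluded_middle_informative (k = k)); tauto.
        -- intros [q|q] [] Hne; subst; tauto.
  - split; [|split; [|split; [|split; [|split]]]]; simpl.
    + intros k l Hkl. split; [|split].
      * intros [s|L]; simpl; split.
        -- intros [A B]. split.
           ++ destruct (excluded_middle_informative (DS s = k)); [left; auto|right].
              destruct A; tauto.
           ++ destruct (excluded_middle_informative (DS s = l)); [left; auto|right].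
              destruct B; tauto.
        -- intros [A B]. split; [destruct A as [A|A]; [left; exact A| right; apply A]
                                 | destruct B as [B|B]; [left; exact B | right; apply B]].
        -- intros [A B]. congruence.
        -- intros [[[]|[]] _].
      * intros t [A B]. congruence.
      * intros [s|L] [A B]; [congruence|tauto].
    + intros [s|L]; [exists (DS s); left; auto | exists L; auto].
    + intros t. exists (DT t). reflexivity.
    + intros k x t Ht. destruct (excluded_middle_informative (DT t = k)); [|tauto]. auto.
    + auto.
    + intros [s|L].
      * exists [DS s]. split; [constructor; [simpl; tauto|constructor]|split].
        -- intros k Hk. destruct (excluded_middle_informative (DS s = k)); [left; auto|tauto].
        -- simpl. destruct (excluded_middle_informative (DS s = DS s)); [lia|tauto].
      * exists [L]. split; [constructor; [simpl; tauto|constructor]|split].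
        -- intros k Hk. destruct (excluded_middle_informative (L = k)); [left; auto|tauto].
        -- simpl. destruct (excluded_middle_informative (L = L)); [lia|tauto].
Qed.

Theorem theorem4p15 (Act : Type) (N : net Act) :
  ess_distributed N ->
  exists N' : net Act, LSGA N' /\ bSTb_div_equiv N' N.
Proof.
  intros (Loc & DS & DT & H1 & H2).
  exists (mkN' N Loc DT). split.
  - exact (lsga N Loc DS DT H1).
  - exact (bisim N Loc DT H2).
Qed.
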